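(* Let $G$ be a connected graph with $n\ge 4$ vertices and $m=e(G)\ge n$ edges. If $R(G)>\sqrt{n-1}+\frac{2m-2n+2}{n\sqrt{n-1}}$, then $\frac{q(G)}{R(G)}<\frac{n}{\sqrt{n-1}}$.
   Context: All graphs are finite and simple; $e(G)$ is the number of edges. For a vertex $u$, $d(u)$ is its degree. The Randić index is $R(G)=\sum_{\{u,v\}\in E(G)} \frac{1}{\sqrt{d(u)d(v)}}$. The signless Laplacian is $Q=D+A$ ($D$ the diagonal degree matrix, $A$ the adjacency matrix), and $q(G)$ is its largest eigenvalue. *)

(* Defs.v *)
From HB Require Import structures.
From mathcomp Require Import all_boot all_order all_algebra.
Set Implicit Arguments. Unset Strict Implicit. Unset Printing Implicit Defensive.
Import Order.TTheory GRing.Theory Num.Theory.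
Local Open Scope ring_scope.

Definition simple_graph (n : nat) (e : rel 'I_n) : Prop :=
  symmetric e /\ irreflexive e.

Definition connected_graph (n : nat) (e : rel 'I_n) : Prop :=
  forall x y : 'I_n, connect e x y.

Definition deg (n : nat) (e : rel 'I_n) (u : 'I_n) : nat := #|[set v | e u v]|.

Definition edges (n : nat) (e : rel 'I_n) : {set {set 'I_n}} :=
  [set [set p.1; p.2] | p in [set p : 'I_n * 'I_n | e p.1 p.2]].

Definition num_edges (n : nat) (e : rel 'I_n) : nat := #|edges e|.

(* Randić index: sum over edges {u,v} of 1/sqrt(d(u)d(v)); each unordered
   edge is counted twice in the ordered double sum, hence the factor 1/2. *)
Definition randic (R : rcfType) (n : nat) (e : rel 'I_n) : R :=
  2^-1 * \sum_(u < n) \sum_(v < n | e u v)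
          (Num.sqrt ((deg e u)%:R * (deg e v)%:R))^-1.

Definition signless_laplacian (R : rcfType) (n : nat) (e : rel 'I_n) : 'M[R]_n :=
  \matrix_(i, j) (((i == j) * deg e i)%:R + (e i j)%:R).

Definition is_signless_spectral_radius (R : rcfType) (n : nat) (e : rel 'I_n) (q : R) : Prop :=
  eigenvalue (signless_laplacian R e) q /\
  forall a : R, eigenvalue (signless_laplacian R e) a -> a <= q.

(* Main.v *)
Require Import Defs.
From HB Require Import structures.
From mathcomp Require Import all_boot all_order all_algebra.
From mathcomp Require Import zify ring lra.
Import Order.TTheory GRing.Theory Num.Theory.
Set Implicit Arguments. Unset Strict Implicit. Unset Printing Implicit Defensive.

Section G.
Variables (n : nat) (e : rel 'I_n).
Hypothesis Hs : simple_graph e.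

Lemma deg_le j : (deg e j <= n.-1)%N.
Proof.
have -> : n.-1 = #|[set~ j]| by rewrite cardsC1 card_ord.
rewrite /deg; apply: subset_leq_card.
apply/subsetP => v; rewrite !inE => ev; apply/eqP => vj; subst v.
by case: Hs => _ /(_ j); rewrite ev.
Qed.

Lemma deg_pos (Hc : connected_graph e) (H2 : (2 <= n)%N) u : (0 < deg e u)%N.
Proof.
have [v uv] : exists v : 'I_n, u != v.
  case: (eqVneq (val u) 0%N) => u0.
    by exists (Ordinal H2); apply/eqP => /(congr1 val) /=; rewrite u0.
  by exists (Ordinal (leq_trans (isT : 0 < 2)%N H2)); apply/eqP => /(congr1 val) /=; apply/eqP.
case/connectP: (Hc u v) => [[|x p]] /=; first by move=> _ E; rewrite E eqxx in uv.
case/andP => ux _ _; rewrite /deg card_gt0; apply/set0Pn; exists x; by rewrite inE.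
Qed.

Lemma handshake : (\sum_u deg e u <= 2 * num_edges e)%N.
Proof.
pose P := [set p : 'I_n * 'I_n | e p.1 p.2].
have -> : (\sum_u deg e u = #|P|)%N.
  rewrite -sum1_card.
  transitivity (\sum_(u | true) \sum_(v | e u v) 1)%N.
    by apply: eq_bigr => u _; rewrite /deg -sum1_card; apply: eq_bigl => v; rewrite inE.
  by rewrite pair_big_dep; apply: eq_bigl => p; rewrite inE.
pose f (p : 'I_n * 'I_n) := ([set p.1; p.2], (p.1 < p.2)%N).
have finj : {in P &, injective f}.
  move=> [a b] [c d]; rewrite !inE /= => eab ecd [] E lt.
  have ab : a != b by apply/eqP => ab; subst; case: Hs => _ /(_ b); rewrite eab.
  have cd : c != d by apply/eqP => cd; subst; case: Hs => _ /(_ d); rewrite ecd.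
  have ha : a \in [set c; d] by rewrite -E !inE eqxx.
  have hb : b \in [set c; d] by rewrite -E !inE eqxx orbT.
  have hc : c \in [set a; b] by rewrite E !inE eqxx.
  move: ha hb hc ab cd lt; rewrite !inE.
  move=> /orP[]/eqP-> /orP[]/eqP-> //; rewrite ?eqxx //=.
  move=> _ _ cd; case: (ltngtP c d) => // /val_inj cdE.
  by rewrite cdE eqxx in cd.
rewrite -(card_in_imset finj).
have : [set f x | x in P] \subset setX (edges e) [set: bool].
  apply/subsetP => _ /imsetP[p pP ->]; rewrite !inE andbT /edges.
  by apply/imsetP; exists p.
move/subset_leq_card; rewrite cardsX cardsT card_bool mulnC.
by [].
Qed.
End G.
Lemma sum_lower n (e : rel 'I_n) (Hs : simple_graph e) (Hp : forall u, (0 < deg e u)%N) i :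
  (\sum_(j | e i j) deg e j + n.-1 <= \sum_u deg e u)%N.
Proof.
pose N := [set v | e i v].
have iN : i \notin N by rewrite inE; case: Hs => _ /(_ i) ->.
rewrite [X in (_ <= X)%N](bigID (mem (i |: N))) /=.
rewrite big_setU1 //=.
have -> : (\sum_(j in N) deg e j = \sum_(j | e i j) deg e j)%N.
  by apply: eq_bigl => j; rewrite inE.
have : (#|~: (i |: N)| <= \sum_(j | j \notin i |: N) deg e j)%N.
  rewrite -sum1_card (eq_bigl (fun j => j \notin i |: N)); last by move=> j; rewrite inE.
  apply: leq_sum => j _; exact: Hp.
have : (#|i |: N| + #|~: (i |: N)| = n)%N by rewrite cardsC card_ord.
rewrite cardsU1 iN /=.
have h : (0 < #|N|)%N := Hp i.
move: (\sum_(j | e i j) deg e j) (\sum_(j | j \notin i |: N) deg e j) => A B.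
change (deg e i) with #|N|. move: h (#|N|) (#|~: (i |: N)|) => h X Y. rewrite -subn1. lia.
Qed.
Local Open Scope ring_scope.
Lemma eig_bound (R : rcfType) n (e : rel 'I_n) (Hs : simple_graph e)
  (Hp : forall u, (0 < deg e u)%N) (q : R) :
  eigenvalue (signless_laplacian R e) q ->
  exists i, q * (deg e i)%:R <= (deg e i)%:R ^+ 2 + (\sum_(j | e i j) deg e j)%:R.
Proof.
case/eigenvalueP => v Hv vnz.
have [j0 vj0] : exists j, v 0 j != 0.
  apply/existsP; move: vnz; apply: contraR; rewrite negb_exists => /forallP H.
  apply/eqP/matrixP => a b; rewrite ord1 mxE; exact/eqP/negbNE/H.
pose y j := `|v 0 j| / (deg e j)%:R.
have dpos j : 0 < (deg e j)%:R :> R by rewrite ltr0n.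
have vy j : `|v 0 j| = (deg e j)%:R * y j.
  by rewrite /y mulrC divfK // gt_eqF.
case: (@arg_maxP _ R _ j0 xpredT y isT) => i _ Hi.
have yi : 0 < y i.
  apply: (lt_le_trans _ (Hi j0 isT)); rewrite /y divr_gt0 //; by rewrite normr_gt0.
have Ei : q * v 0 i = (deg e i)%:R * v 0 i + \sum_(j | e i j) v 0 j.
  have := congr1 (fun M : 'M[R]_(1,n) => M 0 i) Hv; rewrite !mxE => <-.
  under eq_bigr => j _ do rewrite mxE.
  rewrite (eq_bigr (fun j => v 0 j * ((j == i)%:R * (deg e j)%:R) + v 0 j * (e j i)%:R)); last by move=> j _; rewrite natrM mulrDr.
  rewrite big_split /= (bigD1 i) //= eqxx mul1r big1 ?addr0; last first.
    by move=> j /negbTE ->; rewrite mul0r mulr0.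
  rewrite mulrC; congr (_ + _).
  rewrite [RHS]big_mkcond /=; apply: eq_bigr => j _.
  case: Hs => sy _; rewrite sy; case: (e i j); by rewrite ?mulr1 ?mulr0.
have H1 : `|q - (deg e i)%:R| * ((deg e i)%:R * y i) <=
          (\sum_(j | e i j) deg e j)%:R * y i.
  rewrite -vy -normrM mulrBl Ei addrAC mulrC subrr add0r.
  apply: (le_trans (ler_norm_sum _ _ _)).
  rewrite natr_sum mulr_suml; apply: ler_sum => j _.
  rewrite vy; apply: ler_wpM2l; [exact: ltW | exact: Hi].
have H2 : `|q - (deg e i)%:R| * (deg e i)%:R <= (\sum_(j | e i j) deg e j)%:R.
  by rewrite -(ler_pM2r yi) -mulrA.
exists i.
have := ler_norm (q - (deg e i)%:R).
move: H2 (dpos i); set d := (deg e i)%:R; set S := (_%:R); set a := `|_|.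
nra.
Qed.
Lemma nat_ineq (d S m N1 : nat) : (1 <= d -> d <= N1 -> 3 <= N1 -> S <= d * N1 -> S + N1 <= 2 * m ->
  N1 * (d * d) + N1 * S + d * N1 <= 2 * m * d + d * (N1 * N1))%N.
Proof.
move=> h1 h2 h3 h4 h5.
case: (leqP (d * N1 + N1) (2 * m)) => h6.
  nia.
have h7 : (S + N1 <= 2 * m)%N by [].
nia.
Qed.
Unset Implicit Arguments.

Theorem lemma2p4 (R : rcfType) (n : nat) (e : rel 'I_n) (q : R) :
  simple_graph e -> connected_graph e -> (4 <= n)%N ->
  (n <= num_edges e)%N ->
  is_signless_spectral_radius e q ->
  randic R e > Num.sqrt ((n - 1)%:R) +
     (2 * (num_edges e)%:R - 2 * n%:R + 2) / (n%:R * Num.sqrt ((n - 1)%:R)) ->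
  q / randic R e < n%:R / Num.sqrt ((n - 1)%:R).
Proof.
move=> Hs Hc n4 nm [Heig _] HR.
have Hp := deg_pos Hc (leq_trans (isT : (2 <= 4)%N) n4).
have [i Hi] := eig_bound Hs Hp Heig.
set d := deg e i in Hi.
set S := (\sum_(j | e i j) deg e j)%N in Hi.
set m := num_edges e in nm HR.
have hS1 : (S <= d * n.-1)%N.
  apply: (@leq_trans (\sum_(j in [set v | e i v]) n.-1)%N).
    rewrite /S (eq_bigl (fun j => j \in [set v | e i v])); last by move=> j; rewrite inE.
    by apply: leq_sum => j _; apply: deg_le.
  by rewrite sum_nat_const.
have hS2 : (S + n.-1 <= 2 * m)%N.
  apply: leq_trans (sum_lower Hs Hp i) _; exact: handshake.
have hd1 : (1 <= d)%N := Hp i.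
have hd2 : (d <= n.-1)%N := deg_le Hs i.
have n3 : (3 <= n.-1)%N by lia.
have Hn := nat_ineq hd1 hd2 n3 hS1 hS2.
have n1E : (n - 1)%:R = n.-1%:R :> R by rewrite subn1.
have nE : n%:R = n.-1%:R + 1 :> R.
  by rewrite natr1 prednK // (leq_trans _ n4).
rewrite n1E nE in HR *.
move: Hn => /(congr1 (fun x : bool => x)); rewrite -(ler_nat R) !natrD !natrM => Hn.
clear n1E nE.
have {}nm : (n.-1 + 1 <= m)%N by lia.
move: Hi Hn HR hd1 hd2 n3 nm; set N1 := n.-1 => Hi Hn HR hd1 hd2 n3 nm.
have N1pos : (0 : R) < N1%:R by rewrite ltr0n; lia.
have dpos : (0 : R) < d%:R by rewrite ltr0n.
have hm : (N1%:R + 1 : R) <= m%:R by move: nm; rewrite -(ler_nat R) natrD => ->.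
move: Hi Hn HR hm N1pos dpos.
set Sr := S%:R; set dr := d%:R; set N := N1%:R; set M := m%:R; set Rr := randic R e.
move=> Hi Hn HR hm N1pos dpos.
set s := Num.sqrt N.
have s0 : 0 < s by rewrite sqrtr_gt0.
have ss : s * s = N by rewrite -expr2 sqr_sqrtr // ltW.
have qN : q * N <= 2 * M + N * N - N.
  have : (q * N) * dr <= (2 * M + N * N - N) * dr by nra.
  by rewrite ler_pM2r.
have HR' : (N + 1) * N + (2 * M - 2 * (N + 1) + 2) < (N + 1) * s * Rr.
  have ns : 0 < (N + 1) * s by apply: mulr_gt0 => //; lra.
  have := HR; rewrite -(ltr_pM2l ns) => H.
  apply: le_lt_trans H; rewrite le_eqVlt; apply/orP; left; apply/eqP.
  rewrite -/s [RHS]mulrDr -[(N + 1) * s * s]mulrA ss; field.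
  apply/andP; split; [by rewrite gt_eqF | rewrite gt_eqF // -/N; lra].
have Rpos : 0 < Rr.
  apply: lt_trans HR; apply: ltr_wpDr => //.
  apply: divr_ge0; [lra|]; apply: mulr_ge0; [lra | exact: ltW].
rewrite (ltr_pdivrMr _ _ Rpos) mulrAC (ltr_pdivlMr _ _ s0).
have : q * s * s < (N + 1) * Rr * s by nra.
by rewrite ltr_pM2r.
Qed.
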